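(* Let $n \ge 0$ and let $A_n$ be the $n$th Laver table. For $k \ge 1$ let $C_k(A_n)$ be the free $\mathbb{Z}$-module with basis $A_n^k$, let $C_0(A_n) = \mathbb{Z}$ (its basis element $1$ identified with the empty tuple), and for $k \ge 1$ let $\partial^*_k : C_k(A_n) \to C_{k-1}(A_n)$ be the $\mathbb{Z}$-linear map given on basis elements by $$\partial^*_k(x_1, \dots, x_k) = \sum_{i=1}^k (-1)^{i-1} (x_1, \dots, x_{i-1},\ x_i * x_{i+1}, \dots, x_i * x_k),$$ and let $\partial^*_0 = 0$. Then the chain complex $(C_k(A_n), \partial^*_k)_{k \ge 0}$ is acyclic: for every $k \ge 0$ one has $\ker \partial^*_k = \operatorname{im} \partial^*_{k+1}$, i.e.\ all its homology groups are trivial.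
   Context: For $N \ge 1$ there is a unique binary operation $*$ on $\{1, \dots, N\}$ such that, for all $p, q$, one has $p * 1 = p+1$ for $p < N$, $N * 1 = 1$, and $p * (q * 1) = (p * q) * (p * 1)$. For $N = 2^n$ this operation satisfies the left-selfdistributive law $x*(y*z) = (x*y)*(x*z)$; the structure $(\{1, \dots, 2^n\}, * )$ is called the $n$th Laver table and denoted $A_n$. *)

(* Defs.v *)
From mathcomp Require Import all_boot all_order all_algebra.
Set Implicit Arguments. Unset Strict Implicit. Unset Printing Implicit Defensive.
Import GRing.Theory.
Local Open Scope ring_scope.

(* Elements of A_n = {1,...,2^n} are encoded as ordinals i : 'I_(2^n),
   where i stands for the element (val i + 1). *)
Notation laver_carrier n := 'I_(2 ^ n)%N.

(* [is_laver_op n op]: op satisfies the defining laws of the n-th Laver table: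
   p * 1 = p + 1 (p < N), N * 1 = 1, and p * (q * 1) = (p * q) * (p * 1).
   In the encoding, "1" is the ordinal of value 0 and
   "x * 1" is the ordinal of value (val x + 1) mod 2^n. *)
Definition is_laver_op (n : nat) (op : laver_carrier n -> laver_carrier n -> laver_carrier n) :=
  (forall p q : laver_carrier n, val q = 0%N ->
     val (op p q) = ((val p).+1 %% 2 ^ n)%N) /\
  (forall p q r s : laver_carrier n,
     val r = ((val q).+1 %% 2 ^ n)%N -> val s = ((val p).+1 %% 2 ^ n)%N ->
     op p r = op (op p q) s).

(* The i-th face (0-based i) of a (k+1)-tuple:
   (x_0,...,x_{i-1}, x_i * x_{i+1}, ..., x_i * x_k). *)
Definition laver_face (T : finType) (op : T -> T -> T) (k : nat)
    (x : k.+1.-tuple T) (i : 'I_k.+1) : k.-tuple T :=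
  [tuple (if (j < i)%N then tnth x (widen_ord (leqnSn k) j)
          else op (tnth x i) (tnth x (lift ord0 j))) | j < k].

(* Chains of degree k: C_k = free Z-module on T^k, as finitely supported
   coefficient functions {ffun k.-tuple T -> int}; C_0 = Z (empty tuple). *)
Definition chains (T : finType) (k : nat) := {ffun k.-tuple T -> int}.

(* The boundary map d*_{k+1} : C_{k+1} -> C_k, extended Z-linearly:
   d*(x_1..x_{k+1}) = sum_i (-1)^(i-1) face_i(x) (1-based i). *)
Definition laver_bd (T : finType) (op : T -> T -> T) (k : nat)
    (c : chains T k.+1) : chains T k :=
  [ffun y => \sum_(x : k.+1.-tuple T)
               c x * \sum_(i < k.+1 | laver_face op x i == y) (-1) ^+ i].

(* Main.v *)
Require Import Defs.
From mathcomp Require Import all_boot all_order all_algebra.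
From mathcomp Require Import zify.
Set Implicit Arguments. Unset Strict Implicit. Unset Printing Implicit Defensive.
Import GRing.Theory.

Section Lav.
Variable n : nat.
Local Notation N := (2 ^ n)%N.
Variable op : 'I_N -> 'I_N -> 'I_N.
Hypothesis H1 : forall p q : 'I_N, val q = 0 -> val (op p q) = ((val p).+1 %% N)%N.
Hypothesis H2 : forall p q r s : 'I_N,
     val r = ((val q).+1 %% N)%N -> val s = ((val p).+1 %% N)%N ->
     op p r = op (op p q) s.

Lemma N_gt0 : (0 < N)%N. Proof. by rewrite expn_gt0. Qed.
Local Notation m := N.-1.
Lemma m_lt : (m < N)%N. Proof. by rewrite prednK ?N_gt0. Qed.
Definition top : 'I_N := Ordinal m_lt.
Definition zero : 'I_N := Ordinal N_gt0.

Lemma le_m (p : 'I_N) : (val p <= m)%N.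
Proof. by rewrite -ltnS prednK ?N_gt0 ?ltn_ord. Qed.

Lemma S_top : ((m.+1) %% N)%N = 0%N.
Proof. by rewrite prednK ?N_gt0 // modnn. Qed.

Lemma S_small v : (v < m)%N -> (v.+1 %% N)%N = v.+1.
Proof. by move=> h; rewrite modn_small // -(prednK N_gt0) ltnS. Qed.

Lemma eq_top (p : 'I_N) : val p = m -> p = top.
Proof. by move=> h; apply: val_inj. Qed.

Lemma top_id q : op top q = q.
Proof.
suff: forall v (q : 'I_N), val q = v -> op top q = q by move/(_ _ q erefl).
elim=> [|v IH] {}q hq.
  by apply: val_inj; rewrite H1 //= S_top hq.
have hv : (v < N)%N by rewrite -hq; exact: ltnW (ltn_ord q).
have hvm : (v < m)%N by rewrite -ltnS prednK ?N_gt0 // -hq ltn_ord.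
rewrite (H2 (q := Ordinal hv) (s := zero)); first last.
- by rewrite /= S_top.
- by rewrite /= hq S_small.
rewrite IH //; apply: val_inj; rewrite H1 //= S_small //.
Qed.

Lemma gt_op (p : 'I_N) : (val p < m)%N -> forall q, (val p < val (op p q))%N.
Proof.
suff: forall d (p : 'I_N), (m - val p <= d)%N -> (val p < m)%N ->
  forall q, (val p < val (op p q))%N by apply.
elim=> [|d IHd] {}p hd hp.
  by move: hd; rewrite leqn0 subn_eq0 leqNgt hp.
suff: forall v (q : 'I_N), val q = v -> (val p < val (op p q))%N by move=> h q; exact: h.
elim=> [|v IH] q hq.
  by rewrite H1 // S_small.
have hv : (v < N)%N by rewrite -hq; exact: ltnW (ltn_ord q).
have hvm : (v < m)%N by rewrite -ltnS prednK ?N_gt0 // -hq ltn_ord.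
rewrite (H2 (q := Ordinal hv) (s := Ordinal (leq_ltn_trans hp m_lt))); first last.
- by rewrite /= S_small.
- by rewrite /= hq S_small.
set x := op p _.
have hx : (val p < val x)%N by apply: IH.
have := le_m x; rewrite leq_eqVlt => /orP [/eqP/eq_top -> | hxm].
  by rewrite top_id /=.
apply: (ltn_trans hx); apply: (IHd x) => //.
move: hd hx hxm; clear; lia.
Qed.


Lemma right_top x : op x top = top.
Proof.
have := le_m x; rewrite leq_eqVlt => /orP [/eqP/eq_top -> | hxm].
  exact: top_id.
have hs : (val x).+1 < N by exact: leq_ltn_trans hxm m_lt.
have E := H2 (p := x) (q := top) (r := zero) (s := Ordinal hs).
have := le_m (op x top); rewrite leq_eqVlt => /orP [/eqP/eq_top // | hym].
have h1 := gt_op hxm top.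
have h2 := gt_op hym (Ordinal hs).
have : val (op x zero) = val (op (op x top) (Ordinal hs)).
  by rewrite -E //= ?S_top ?S_small.
rewrite H1 //= S_small // => h3.
exfalso; move: h1 h2 h3 => /= h1 h2 h3; lia.
Qed.

Lemma LDlaver pp aa bb : op pp (op aa bb) = op (op pp aa) (op pp bb).
Proof.
suff: forall d (p : 'I_N), (m - val p <= d)%N -> forall a b, op p (op a b) = op (op p a) (op p b).
  by move/(_ _ pp (leqnn _)).
elim=> [|d IHd] {}p hd.
  have hp : p = top by apply: eq_top; have := le_m p; move: hd; clear; lia.
  by move=> a' b'; rewrite hp !top_id.
have := le_m p; rewrite leq_eqVlt => /orP [/eqP/eq_top -> | hpm].
  by move=> a' b'; rewrite !top_id.
have hps : (val p).+1 < N by exact: leq_ltn_trans hpm m_lt.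
pose sp : 'I_N := Ordinal hps.
have Esp : forall b, op p (op b zero) = op (op p b) sp.
  by move=> b'; apply: H2 => //=; [rewrite H1 // | rewrite S_small].
have IHc : forall c, (val p < val c)%N -> forall a b, op c (op a b) = op (op c a) (op c b).
  by move=> c hc; apply: IHd; move: hd hc (le_m c); clear; lia.
suff: forall d' (a : 'I_N), (m - val a <= d')%N -> forall b, op p (op a b) = op (op p a) (op p b).
  by move=> h a' b'; apply: (h _ a' (leqnn _)).
elim=> [|d' IHa] {}a hda.
  have ha : a = top by apply: eq_top; have := le_m a; move: hda; clear; lia.
  by move=> b'; rewrite ha top_id right_top top_id.
have := le_m a; rewrite leq_eqVlt => /orP [/eqP/eq_top -> | ham].
  by move=> b'; rewrite top_id right_top top_id.
have IHa' : forall c, (val a < val c)%N -> forall b, op p (op c b) = op (op p c) (op p b).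
  by move=> c hc; apply: IHa; move: hda hc (le_m c); clear; lia.
have has : (val a).+1 < N by exact: leq_ltn_trans ham m_lt.
suff: forall v (b : 'I_N), val b = v -> op p (op a b) = op (op p a) (op p b).
  by move=> h b'; exact: h.
elim=> [|v IH] b hb.
  by apply: H2; rewrite H1.
have hv : (v < N)%N by rewrite -hb; exact: ltnW (ltn_ord b).
have hvm : (v < m)%N by rewrite -ltnS prednK ?N_gt0 // -hb ltn_ord.
pose b0 : 'I_N := Ordinal hv.
have hbS : val b = ((val b0).+1 %% N)%N by rewrite /= S_small.
rewrite (H2 (p := a) (q := b0) (r := b) (s := op a zero)) //; last by rewrite H1.
rewrite (IHa' _ (gt_op ham b0)) Esp (IH b0) //.
rewrite -IHc ?gt_op //.
by rewrite [in RHS](H2 (p := p) (q := b0) (r := b) (s := sp)) //= S_small.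
Qed.

End Lav.

Local Open Scope ring_scope.

Section Gen.
Variable T : finType.
Local Notation ch k := {ffun k.-tuple T -> int}.

Definition delta k (x : k.-tuple T) : ch k := [ffun z => (z == x)%:R].
Definition lin k m (F : k.-tuple T -> ch m) (c : ch k) : ch m :=
  \sum_x F x *~ c x.

Lemma lin_delta k m (F : k.-tuple T -> ch m) x : lin F (delta x) = F x.
Proof.
rewrite /lin (bigD1 x) //= ffunE eqxx mulr1z big1 ?addr0 // => y /negbTE ny.
by rewrite ffunE ny mulr0z.
Qed.

Lemma linD k m (F : k.-tuple T -> ch m) c1 c2 : lin F (c1 + c2) = lin F c1 + lin F c2.
Proof. by rewrite /lin -big_split /=; apply: eq_bigr => x _; rewrite ffunE mulrzDr. Qed.

Lemma lin0 k m (F : k.-tuple T -> ch m) : lin F 0 = 0.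
Proof. by rewrite /lin big1 // => x _; rewrite ffunE mulr0z. Qed.

Lemma linN k m (F : k.-tuple T -> ch m) c : lin F (- c) = - lin F c.
Proof. by rewrite /lin -sumrN; apply: eq_bigr => x _; rewrite ffunE mulrNz. Qed.

Lemma linZ k m (F : k.-tuple T -> ch m) a c : lin F (c *~ a) = lin F c *~ a.
Proof. by rewrite /lin mulrz_suml; apply: eq_bigr => x _; rewrite ffunMzE mulrzz mulrzA. Qed.

Lemma linB k m (F : k.-tuple T -> ch m) c1 c2 : lin F (c1 - c2) = lin F c1 - lin F c2.
Proof. by rewrite linD linN. Qed.

Lemma lin_sum k m (F : k.-tuple T -> ch m) I (r : seq I) (P : pred I) G :
  lin F (\sum_(i <- r | P i) G i) = \sum_(i <- r | P i) lin F (G i).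
Proof. exact: (big_morph _ (linD F) (lin0 F)). Qed.

Lemma lin_ext k m (F G : k.-tuple T -> ch m) c : (forall x, F x = G x) -> lin F c = lin G c.
Proof. by move=> FG; apply: eq_bigr => x _; rewrite FG. Qed.

Lemma lin_comp k m l (F : k.-tuple T -> ch m) (G : m.-tuple T -> ch l) c :
  lin G (lin F c) = lin (fun x => lin G (F x)) c.
Proof. by rewrite [lin F c]/lin lin_sum; apply: eq_bigr => x _; rewrite linZ. Qed.

Lemma lin_id k (c : ch k) : lin (@delta k) c = c.
Proof.
apply/ffunP => y; rewrite /lin sum_ffunE (bigD1 y) //= ffunMzE !ffunE eqxx mulrzz mul1r.
rewrite big1 ?addr0 // => x /negbTE nx; rewrite ffunMzE !ffunE eq_sym nx mulrzz mul0r.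

by [].

Qed.

Lemma linBF k m (F G : k.-tuple T -> ch m) c :
  lin (fun x => F x - G x) c = lin F c - lin G c.
Proof.
by rewrite /lin -sumrB; apply: eq_bigr => x _; rewrite mulrzBl.
Qed.

Lemma lin_zero k m c : lin (fun _ : k.-tuple T => (0 : ch m)) c = 0.
Proof. by rewrite /lin big1 // => x _; rewrite mul0rz. Qed.

Variable op : T -> T -> T.

Definition D k (x : k.+1.-tuple T) : ch k :=
  \sum_(i < k.+1) delta (laver_face op x i) *~ ((-1) ^+ i).

Lemma bdE k (c : ch k.+1) : laver_bd op c = lin (@D k) c.
Proof.
apply/ffunP => y; rewrite /laver_bd /lin ffunE sum_ffunE; apply: eq_bigr => x _.
rewrite ffunMzE /D sum_ffunE big_mkcond /= mulrC -mulrzz; congr (_ *~ _).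
apply: eq_bigr => i _.
by rewrite ffunMzE !ffunE eq_sym; case: eqP => _; rewrite ?mulrzz ?mul1r ?mul0r.
Qed.


Lemma face0 k a (y : k.-tuple T) :
  laver_face op (cons_tuple a y) ord0 = map_tuple (op a) y.
Proof.
apply: eq_from_tnth => j; rewrite tnth_mktuple tnth_map /=.
by rewrite !(tnth_nth a) /=.
Qed.

Lemma faceS k a (y : k.+1.-tuple T) (i : 'I_k.+1) :
  laver_face op (cons_tuple a y) (lift ord0 i) = cons_tuple a (laver_face op y i).
Proof.
apply: eq_from_tnth => j; rewrite tnth_mktuple.
rewrite !(tnth_nth a) /= /bump leq0n add1n.
case: j => [[|j] Hj] //=.
have Hjk : (j < k)%N by [].
rewrite (nth_map (Ordinal Hjk)) ?size_enum_ord // nth_enum_ord //=.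
rewrite ltnS; case: ifP => Hji.
  by rewrite (tnth_nth a) /= nth_enum_ord.
by rewrite !(tnth_nth a) /= nth_enum_ord.
Qed.



Hypothesis LD : forall p q r, op p (op q r) = op (op p q) (op p r).

Lemma face_map k a (y : k.+1.-tuple T) (i : 'I_k.+1) :
  laver_face op (map_tuple (op a) y) i = map_tuple (op a) (laver_face op y i).
Proof.
apply: eq_from_tnth => j; rewrite [RHS]tnth_map !tnth_mktuple !tnth_map.
by case: ifP.
Qed.

Definition Pc a k (z : k.-tuple T) : ch k.+1 := delta (cons_tuple a z).
Definition Mc a k (z : k.-tuple T) : ch k := delta (map_tuple (op a) z).

Lemma D_cons0 a (y : 0.-tuple T) : D (cons_tuple a y) = Mc a y.
Proof. by rewrite /D big_ord1 face0 expr0 mulr1z. Qed.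

Lemma D_consS k a (y : k.+1.-tuple T) :
  D (cons_tuple a y) = Mc a y - lin (@Pc a k) (D y).
Proof.
rewrite /D big_ord_recl face0 expr0 mulr1z; congr (_ + _).
rewrite lin_sum -sumrN; apply: eq_bigr => i _.
rewrite linZ lin_delta faceS lift0 exprS mulN1r mulrNz.
by [].
Qed.

Lemma D_map k a (y : k.+1.-tuple T) : D (map_tuple (op a) y) = lin (@Mc a k) (D y).
Proof.
rewrite /D lin_sum; apply: eq_bigr => i _.
by rewrite linZ lin_delta face_map.
Qed.

Lemma DPc0 a (c : ch 0) : lin (@D 0) (lin (@Pc a 0) c) = lin (@Mc a 0) c.
Proof.
rewrite lin_comp; apply: lin_ext => z.
by rewrite /Pc lin_delta D_cons0.
Qed.

Lemma DPcS k a (c : ch k.+1) :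
  lin (@D k.+1) (lin (@Pc a k.+1) c) = lin (@Mc a k.+1) c - lin (@Pc a k) (lin (@D k) c).
Proof.
rewrite lin_comp (@lin_comp _ _ _ (@D k)) -linBF; apply: lin_ext => z.
by rewrite /Pc lin_delta D_consS.
Qed.

Lemma DD k (x : k.+2.-tuple T) : lin (@D k) (D x) = 0.
Proof.
elim: k x => [|k IH] x; case/tupleP: x => a y.
  by rewrite D_consS linB /Mc lin_delta D_map DPc0 subrr.
by rewrite D_consS linB /Mc lin_delta D_map DPcS IH lin0 subr0 subrr.
Qed.

Variable e : T.
Hypothesis He : forall q, op e q = q.

Lemma Me k (z : k.-tuple T) : Mc e z = delta z.
Proof.
rewrite /Mc; congr delta; apply: eq_from_tnth => j.
by rewrite tnth_map He.
Qed.

Lemma homot0 (c : ch 0) : lin (@D 0) (lin (@Pc e 0) c) = c.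
Proof.
by rewrite DPc0 -[RHS]lin_id; apply: lin_ext => z; rewrite Me.
Qed.

Lemma homotS k (c : ch k.+1) :
  lin (@D k.+1) (lin (@Pc e k.+1) c) = c - lin (@Pc e k) (lin (@D k) c).
Proof.
rewrite DPcS; congr (_ - _).
by rewrite -[RHS]lin_id; apply: lin_ext => z; rewrite Me.
Qed.

End Gen.

Theorem proposition1p12 (n : nat)
    (op : laver_carrier n -> laver_carrier n -> laver_carrier n)
    (Hop : is_laver_op op) :
  (* degree 0: d*_0 = 0, so ker d*_0 = C_0 must equal im d*_1 *)
  (forall c : chains (laver_carrier n) 0,
     exists d : chains (laver_carrier n) 1, laver_bd op d = c) /\
  (* degree k+1 >= 1: ker d*_{k+1} = im d*_{k+2} *)
  (forall (k : nat) (c : chains (laver_carrier n) k.+1),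
     laver_bd op c = 0 <->
     exists d : chains (laver_carrier n) k.+2, laver_bd op d = c).
Proof.
case: Hop => H1 H2.
have LD := LDlaver H1 H2.
have He : forall q, op (top n) q = q := top_id H1 H2.
split.
  move=> c; exists (lin (@Pc _ (top n) 0) c).
  by rewrite bdE (homot0 He).
move=> k c; split.
  move=> H0; exists (lin (@Pc _ (top n) k.+1) c).
  by rewrite bdE (homotS He) -bdE H0 lin0 subr0.
case=> d <-; rewrite !bdE lin_comp.
rewrite (@lin_ext _ _ _ _ (fun _ => 0)) ?lin_zero // => x.
exact: DD.
Qed.
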